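(* Let $B\subset GL_n(\mathbb{C})$ be the group of invertible upper triangular matrices acting on $\mathfrak{b}^*=\mathfrak{gl}_n/\mathfrak{n}^+$ by conjugation, $b\cdot s=bsb^{-1}$. Then $\mathbb{C}[\mathfrak{b}^*]^B=\mathbb{C}[\operatorname{tr}(s)]$.
   Context: $\mathfrak{n}^+$ denotes the strictly upper triangular $n\times n$ matrices; $\mathfrak{b}^*$ is identified with $\mathfrak{gl}_n/\mathfrak{n}^+$ (equivalently with lower triangular matrices), and conjugation by $B$ preserves $\mathfrak{n}^+$ so descends to the quotient. The trace is well defined on $\mathfrak{gl}_n/\mathfrak{n}^+$. *)

(* Defs.v *)
From HB Require Import structures.
From mathcomp Require Import all_boot all_algebra.
From mathcomp Require Import complex.
From mathcomp Require Import Rstruct.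
From mathcomp Require Export mpoly.
Set Implicit Arguments. Unset Strict Implicit. Unset Printing Implicit Defensive.
Import GRing.Theory Num.Theory.
Local Open Scope ring_scope.

Definition CC : numClosedFieldType := (Rdefinitions.R)[i].

(* Coordinates on gl_n = 'M[CC]_n: the variable with index
   mxvec_index i j is the (i,j) entry. *)
Definition coords (n : nat) (s : 'M[CC]_n) : 'I_(n * n) -> CC :=
  fun k => mxvec s ord0 k.

(* The coordinate with index k is a lower-triangular (i >= j) entry,
   i.e. a coordinate on b^* = gl_n / n^+. *)
Definition lowvar (n : nat) (k : 'I_(n * n)) : bool :=
  [exists i : 'I_n, exists j : 'I_n, (j <= i)%N && (k == mxvec_index i j)].

(* C[b^*]: polynomials on gl_n involving only the lower-triangular
   coordinates, i.e. polynomial functions on gl_n / n^+. *)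
Definition bstar_poly (n : nat) (p : {mpoly CC[n * n]}) : bool :=
  all (fun m : 'X_{1.. n * n} => [forall k, (m k != 0)%N ==> lowvar k]) (msupp p).

Definition borel (n : nat) (b : 'M[CC]_n) : bool :=
  (b \in unitmx) && [forall i : 'I_n, forall j : 'I_n, (j < i)%N ==> (b i j == 0)].

Definition B_invariant (n : nat) (p : {mpoly CC[n * n]}) : Prop :=
  forall b : 'M[CC]_n, borel b ->
  forall s : 'M[CC]_n, p.@[coords (b *m s *m invmx b)] = p.@[coords s].

Definition trace_poly (n : nat) : {mpoly CC[n * n]} :=
  \sum_(i < n) 'X_(mxvec_index i i).

(* Main.v *)
Require Import Defs.
From HB Require Import structures.
From mathcomp Require Import all_boot all_algebra.
From mathcomp Require Import complex.
From mathcomp Require Import Rstruct.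
From mathcomp Require Import mpoly.
Import GRing.Theory Num.Theory.
Local Open Scope ring_scope.
From mathcomp Require Import zify ring.

Lemma enc_inj (B k : nat) (a b : 'I_k -> nat) :
  (forall i, a i < B)%N -> (forall i, b i < B)%N ->
  (\sum_(i < k) a i * B ^ i = \sum_(i < k) b i * B ^ i)%N ->
  forall i, a i = b i.
Proof.
elim: k a b => [|k IH] a b Ha Hb E i; first by case: i.
move: E; rewrite !big_ord_recl /= !expn0 !muln1.
have sh (c : 'I_k.+1 -> nat) : (\sum_(i < k) c (lift ord0 i) * B ^ (bump 0 i) =
    B * \sum_(i < k) c (lift ord0 i) * B ^ i)%N.
  rewrite big_distrr /=; apply: eq_bigr => j _; rewrite /bump /= add1n expnS; lia.
rewrite !sh => E.
have B0 : (0 < B)%N by have := Ha ord0; lia.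
have e0 : a ord0 = b ord0.
  have := congr1 (fun x => x %% B)%N E; rewrite /=.
  rewrite ![(a ord0 + _)%N]addnC ![(b ord0 + _)%N]addnC.
  rewrite ![(B * _)%N]mulnC !modnMDl !modn_small //.
have {}E : (\sum_(i < k) a (lift ord0 i) * B ^ i = \sum_(i < k) b (lift ord0 i) * B ^ i)%N.
  move: E; rewrite e0 => /addnI /eqP; rewrite eqn_pmul2l // => /eqP //.
have := IH (fun j => a (lift ord0 j)) (fun j => b (lift ord0 j)) (fun j => Ha _) (fun j => Hb _) E.
case: (unliftP ord0 i) => [j ->|->] //; by move=> H; apply: H.
Qed.

Lemma vanish (k : nat) (p : {mpoly CC[k]}) :
  (forall v, p.@[v] = 0) -> p = 0.
Proof.
move=> H.
set B := msize p.
pose enc (m : 'X_{1..k}) := (\sum_(i < k) m i * B ^ i)%N.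
pose P : {poly CC} := \sum_(m <- msupp p) p@_m *: 'X^(enc m).
have PE c : P.[c] = p.@[fun i => c ^+ (B ^ i)].
  rewrite mevalE /P horner_sum; apply: eq_bigr => m _.
  rewrite hornerZ hornerXn; congr (_ * _).
  rewrite /enc -prodrXr; apply: eq_bigr => i _; rewrite -exprM mulnC //.
have P0 : P = 0.
  apply/eqP; apply/negPn/negP => nz.
  have Hr : all (root P) [seq i%:R | i <- iota 0 (size P)].
    by apply/allP => x _; rewrite /root PE H.
  have Hu : uniq [seq (i%:R : CC) | i <- iota 0 (size P)].
    rewrite map_inj_uniq ?iota_uniq // => x y /eqP; rewrite eqr_nat => /eqP //.
  by have := max_poly_roots nz Hr Hu; rewrite size_map size_iota ltnn.
have bnd m i : m \in msupp p -> (m i < B)%N.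
  move=> mi; apply: leq_ltn_trans (msize_mdeg_lt mi).
  by rewrite mdegE (bigD1 i) //= leq_addr.
apply/mpolyP => m; rewrite mcoeff0.
case: (boolP (m \in msupp p)) => [mi|]; last by move/memN_msupp_eq0.
have := congr1 (fun q : {poly CC} => q`_(enc m)) P0.
rewrite coef0 /P coef_sum (bigD1_seq m) ?msupp_uniq //= coefZ coefXn eqxx mulr1.
rewrite big1_seq ?addr0 //.
move=> m' /andP [ne m'i]; rewrite coefZ coefXn.
case: eqP => [ee|]; last by rewrite mulr0.
case/negP: ne; apply/eqP/mnmP => i; symmetry.
by apply: (@enc_inj B k (fun i => m i) (fun i => m' i) _ _ ee) => j; apply: bnd.
Qed.

Lemma lower_eq n (p : {mpoly CC[n * n]}) (s s' : 'M[CC]_n) :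
  bstar_poly p -> (forall i j : 'I_n, (j <= i)%N -> s i j = s' i j) ->
  p.@[coords s] = p.@[coords s'].
Proof.
move=> Hb hs; rewrite !mevalE; apply: eq_big_seq => m mi; congr (_ * _).
apply: eq_bigr => k _.
move/allP: Hb => /(_ m mi) /forallP /(_ k) /implyP H.
case: (eqVneq (m k) 0%N) => [->|nz]; first by rewrite !expr0.
case/existsP: (H nz) => i /existsP [j /andP [le /eqP ->]].
by rewrite /coords !mxvecE hs.
Qed.

Definition pev {k} (p : {mpoly CC[k]}) (w : 'I_k -> {poly CC}) : {poly CC} :=
  \sum_(m <- msupp p) (p@_m)%:P * \prod_i w i ^+ m i.

Lemma horner_meval k (p : {mpoly CC[k]}) (w : 'I_k -> {poly CC}) t :
  (pev p w).[t] = p.@[fun i => (w i).[t]].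
Proof.
rewrite /pev horner_sum mevalE; apply: eq_bigr => m _.
rewrite hornerCM horner_prod.
by congr (_ * _); apply: eq_bigr => i _; rewrite horner_exp.
Qed.

Lemma poly_zero (Q : {poly CC}) : (forall k : nat, Q.[k.+1%:R] = 0) -> Q = 0.
Proof.
move=> H; apply/eqP; apply/negPn/negP => nz.
have Hr : all (root Q) [seq i.+1%:R | i <- iota 0 (size Q)].
  by apply/allP => x /mapP [i _ ->]; rewrite /root H.
have Hu : uniq [seq (i.+1%:R : CC) | i <- iota 0 (size Q)].
  rewrite map_inj_uniq ?iota_uniq // => x y /eqP; rewrite eqr_nat => /eqP [] //.
by have := max_poly_roots nz Hr Hu; rewrite size_map size_iota ltnn.
Qed.

Lemma inv_of {n} {A B : 'M[CC]_n} : A *m B = 1%:M -> invmx A = B.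
Proof.
move=> h; have [uA _] := mulmx1_unit h.
by rewrite -[invmx A]mulmx1 -h mulmxA mulVmx // mul1mx.
Qed.

Definition dg {n} (s : 'M[CC]_n) : 'M[CC]_n := diag_mx (\row_i s i i).

Lemma diag_red n (p : {mpoly CC[n * n]}) (s : 'M[CC]_n) :
  bstar_poly p -> B_invariant p -> p.@[coords s] = p.@[coords (dg s)].
Proof.
move=> Hb Hi.
pose M (mu : CC) : 'M[CC]_n := \matrix_(i, j) (s i j * mu ^+ (i - j)).
pose w : 'I_(n * n) -> {poly CC} := fun k =>
  mxvec (\matrix_(i, j) ((s i j)%:P * 'X^(i - j)) : 'M[{poly CC}]_n) ord0 k.
pose P := pev p w.
have PE mu : P.[mu] = p.@[coords (M mu)].
  rewrite /P horner_meval; apply: meval_eq => k.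
  case/mxvec_indexP: k => i j.
  by rewrite /w /coords !mxvecE !mxE hornerCM hornerXn.
have Mmu mu : mu != 0 -> p.@[coords (M mu)] = p.@[coords s].
  move=> nz.
  pose t : 'M[CC]_n := diag_mx (\row_i mu ^+ i).
  pose t' : 'M[CC]_n := diag_mx (\row_i mu^-1 ^+ i).
  have tt : t *m t' = 1%:M.
    rewrite mulmx_diag; apply/matrixP => i j; rewrite !mxE.
    by rewrite -exprMn mulfV // expr1n.
  have bt : borel t.
    apply/andP; split; first by have [] := mulmx1_unit tt.
    apply/forallP => i; apply/forallP => j; apply/implyP => lt.
    by rewrite !mxE (_ : (i == j) = false) ?mulr0n //; apply/negbTE; rewrite neq_ltn lt orbT.
  rewrite -(Hi t bt s) (inv_of tt); apply: lower_eq => // i j le.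
  rewrite mul_mx_diag mul_diag_mx !mxE exprVn.
  rewrite -{2}(subnK le) exprD; field; exact: expf_neq0.
have P0 : P - (p.@[coords s])%:P = 0.
  apply: poly_zero => k; rewrite hornerD hornerN hornerC PE Mmu ?subrr //.
  by rewrite pnatr_eq0.
have := congr1 (fun q : {poly CC} => q.[0]) P0.
rewrite /= hornerD hornerN hornerC horner0 PE => /eqP; rewrite subr_eq0 => /eqP <-.
apply: lower_eq => // i j le; rewrite !mxE expr0n.
case: (eqVneq i j) => [->|ne]; first by rewrite subnn eqxx mulr1 mulr1n.
rewrite mulr0n (_ : (i - j == 0)%N = false) ?mulr0 //.
apply/negbTE; rewrite subn_eq0 -ltnNge ltn_neqAle le andbT eq_sym.
by rewrite -(inj_eq val_inj) in ne.
Qed.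

Lemma mul_delta_l {n} (a b : 'I_n) (A : 'M[CC]_n) :
  delta_mx a b *m A = \matrix_(i, j) ((i == a)%:R * A b j).
Proof.
apply/matrixP => i j; rewrite !mxE (bigD1 b) //= big1 ?addr0.
  by rewrite mxE eqxx andbT.
by move=> k nk; rewrite mxE (negbTE nk) andbF mul0r.
Qed.

Lemma mul_delta_r {n} (a b : 'I_n) (A : 'M[CC]_n) :
  A *m delta_mx a b = \matrix_(i, j) (A i a * (j == b)%:R).
Proof.
apply/matrixP => i j; rewrite !mxE (bigD1 a) //= big1 ?addr0.
  by rewrite mxE eqxx.
by move=> k nk; rewrite mxE (negbTE nk) mulr0.
Qed.

Lemma eD {n} (A B : 'M[CC]_n.+1) i j : (A + B) i j = A i j + B i j.
Proof. by rewrite !mxE. Qed.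
Lemma eN {n} (A : 'M[CC]_n.+1) i j : (- A) i j = - A i j.
Proof. by rewrite !mxE. Qed.
Lemma eZ {n} (c : CC) (A : 'M[CC]_n.+1) i j : (c *: A) i j = c * A i j.
Proof. by rewrite !mxE. Qed.

Lemma dg_entry {n} (A : 'M[CC]_n) i j : dg A i j = A i i *+ (i == j).
Proof. by rewrite !mxE. Qed.

Lemma diag_entry {n} (d : 'rV[CC]_n) i j : diag_mx d i j = d 0 i *+ (i == j).
Proof. by rewrite !mxE. Qed.

Lemma shift_step n (p : {mpoly CC[n.+1 * n.+1]}) (d : 'rV[CC]_n.+1) (l : 'I_n.+1) :
  bstar_poly p -> B_invariant p -> l != ord0 ->
  p.@[coords (diag_mx d)] =
  p.@[coords (diag_mx (\row_i (if i == ord0 then d 0 ord0 + d 0 l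
                               else if i == l then 0 else d 0 i)))].
Proof.
move=> Hb Hi nl.
pose c := d 0 l.
pose b : 'M[CC]_n.+1 := 1%:M + c *: delta_mx ord0 l.
pose b' : 'M[CC]_n.+1 := 1%:M - c *: delta_mx ord0 l.
have EE : delta_mx ord0 l *m delta_mx ord0 l = 0 :> 'M[CC]_n.+1
  by rewrite mul_delta_mx_0.
have bb : b *m b' = 1%:M.
  rewrite /b /b' mulmxDl mulmxBr mulmxBr !mul1mx mulmx1 -!scalemxAl -!scalemxAr EE.
  by rewrite !scaler0 subr0 subrK.
have bB : borel b.
  apply/andP; split; first by have [] := mulmx1_unit bb.
  apply/forallP => i; apply/forallP => j; apply/implyP => lt.
  have ij : (i == j) = false by apply/negbTE; rewrite neq_ltn lt orbT.
  have i0 : (i == ord0) = false by apply/negbTE/eqP => e; move: lt; rewrite e.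
  by rewrite !mxE ij i0 /= mulr0 addr0.
pose s : 'M[CC]_n.+1 := diag_mx d + delta_mx l ord0.
have ds : dg s = diag_mx d.
  apply/matrixP => i j; rewrite !mxE eqxx mulr1n.
  case: (eqVneq i l) => [->|_] /=; last by rewrite addr0.
  by rewrite (negbTE nl) addr0.
rewrite -ds -diag_red // -(Hi b bB s) (inv_of bb) diag_red //.
congr (p.@[coords _]); apply/matrixP => i j; rewrite dg_entry diag_entry.
congr (_ *+ _).
rewrite /b /b' !mulmxDl !mulmxBr !mul1mx !mulmx1 -!scalemxAl -!scalemxAr.
rewrite !mul_delta_r !mul_delta_l !(eD, eN, eZ) !mxE /s ?(eD, eN, eZ) ?mxE ?eqxx.
have l0 : (l == ord0) = false by apply/negbTE.
have o0 : (ord0 == l) = false by rewrite eq_sym.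
case: (eqVneq i ord0) => [->|i0].
  by rewrite o0 l0 ?eqxx /= ?mulr1n ?mulr0n /c; ring.
case: (eqVneq i l) => [->|il].
  by rewrite l0 ?eqxx /= ?mulr1n ?mulr0n /c; ring.
by rewrite /= ?mulr1n ?mulr0n; ring.
Qed.

Definition conc {n} (t : CC) : 'rV[CC]_n.+1 := \row_i (if i == ord0 then t else 0).

Lemma concentrate n (p : {mpoly CC[n.+1 * n.+1]}) (d : 'rV[CC]_n.+1) :
  bstar_poly p -> B_invariant p ->
  p.@[coords (diag_mx d)] = p.@[coords (diag_mx (conc (\sum_k d 0 k)))].
Proof.
move=> Hb Hi.
suff H : forall m (d : 'rV[CC]_n.+1),
    (forall i : 'I_n.+1, (m <= i)%N -> i != ord0 -> d 0 i = 0) ->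
    p.@[coords (diag_mx d)] = p.@[coords (diag_mx (conc (\sum_k d 0 k)))].
  by apply: (H n.+1) => i; rewrite leqNgt ltn_ord.
elim=> [|m IH] {}d Hd.
  suff -> : conc (\sum_k d 0 k) = d by [].
  apply/rowP => i; rewrite mxE (bigD1 ord0) //= big1 ?addr0.
    by case: (eqVneq i ord0) => [->|ne] //; rewrite Hd.
  by move=> k nk; rewrite Hd.
case: (ltnP m n.+1) => [lt|ge]; last first.
  apply: IH => i le; have := ltn_ord i; lia.
case: (posnP m) => [m0|mpos].
  apply: IH => i _ ne; apply: Hd => //; rewrite m0 lt0n.
  by apply: contra ne => /eqP e; apply/eqP/val_inj.
pose l : 'I_n.+1 := Ordinal lt.
have nl : l != ord0 by rewrite -(inj_eq val_inj) /= -lt0n.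
rewrite (@shift_step n p d l Hb Hi nl) IH; last first.
  move=> i le ne; rewrite mxE (negbTE ne).
  case: (eqVneq i l) => // il; apply: Hd => //.
  rewrite ltn_neqAle le andbT; apply: contra il => /eqP e.
  by apply/eqP/val_inj.
congr (p.@[coords (diag_mx (conc _))]).
rewrite [in LHS](bigD1 ord0) //= [in LHS](bigD1 l) //= [in RHS](bigD1 ord0) //= [in RHS](bigD1 l) //=.
rewrite !mxE eqxx (negbTE nl) eqxx.
rewrite (eq_bigr (fun k => d 0 k)); last first.
  by move=> k /andP [k0 kl]; rewrite mxE (negbTE k0) (negbTE kl).
by rewrite add0r addrA.
Qed.

Lemma trace_eval n (s : 'M[CC]_n) : (trace_poly n).@[coords s] = \tr s.
Proof.
rewrite /trace_poly raddf_sum /=; apply: eq_bigr => i _.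
by rewrite mevalXU /coords mxvecE.
Qed.

Lemma poly_eval n (q : {poly CC}) (x : 'I_(n * n) -> CC) :
  ((map_poly (fun c : CC => c%:MP) q).[trace_poly n]).@[x] = q.[(trace_poly n).@[x]].
Proof.
rewrite -horner_map /= -map_poly_comp.
rewrite (eq_map_poly (g := id)) ?map_poly_id // => c /=.
exact: mevalC.
Qed.

Theorem mainTheorem7 (n : nat) (p : {mpoly CC[n * n]}) :
  bstar_poly p ->
  (B_invariant p <->
   exists q : {poly CC}, p = (map_poly (fun c : CC => c%:MP) q).[trace_poly n]).
Proof.
move=> Hb; split; last first.
  move=> [q ->] b bb s; rewrite !poly_eval !trace_eval.
  congr (q.[_]); rewrite mxtrace_mulC mulmxA mulVmx ?mul1mx //.
  by case/andP: bb.
move=> Hi.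
case: n p Hb Hi => [|n] p Hb Hi.
  exists (p.@[fun _ => 0])%:P.
  apply/eqP; rewrite -subr_eq0; apply/eqP; apply: vanish => v.
  rewrite mevalB poly_eval hornerC.
  by rewrite (meval_eq (v2 := fun _ => 0) p) ?subrr // => -[].
pose w0 : 'I_(n.+1 * n.+1) -> {poly CC} := fun k =>
  mxvec (diag_mx (\row_i (if i == ord0 then 'X else 0)) : 'M[{poly CC}]_n.+1) ord0 k.
exists (pev p w0).
have key s : p.@[coords s] =
    ((map_poly (fun c : CC => c%:MP) (pev p w0)).[trace_poly n.+1]).@[coords s].
  rewrite poly_eval trace_eval horner_meval diag_red // /dg concentrate //.
  apply: meval_eq => k; case/mxvec_indexP: k => i j.
  rewrite /w0 /coords !mxvecE !mxE hornerMn.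
  have -> : \sum_k (\row_i0 s i0 i0) 0 k = \tr s.
    by rewrite /mxtrace; apply: eq_bigr => k _; rewrite mxE.
  by case: (i == ord0); rewrite ?hornerX ?horner0.
apply/eqP; rewrite -subr_eq0; apply/eqP; apply: vanish => v.
rewrite mevalB.
pose s : 'M[CC]_n.+1 := vec_mx (\row_k v k).
have cs : coords s =1 v by move=> k; rewrite /coords /s vec_mxK mxE.
by rewrite -!(meval_eq _ cs) key subrr.
Qed.
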